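(* Let $\Omega\subset\mathbb{R}^2$ be the unit disc. Fix $r_1\in(0,1)$ and let $\sigma_1,\sigma_2>0$. If the Neumann-to-Dirichlet maps satisfy $R_{\sigma_1,r_1}=R_{\sigma_2,r_1}$ (as maps $H^{-1/2}(\partial\Omega)\to H^{1/2}(\partial\Omega)$), then $\sigma_1=\sigma_2$.
   Context: Polar coordinates $(r,\phi)$ on the unit disc; $I_n,K_n$ are the modified Bessel functions of first and second kind of order $n$; $g_n=(g,e^{in\phi})$. For $r_1\in(0,1)$, $\sigma>0$ and $g\in H^{-1/2}(\partial\Omega)$, let $\psi$ solve $\frac{1}{r}\partial_r(r\partial_r\psi)+\frac{1}{r^2}\partial_\phi^2\psi-\sigma^{-1}\psi=0$ for $0<r<r_1$; $\frac{1}{r}\partial_r(r\partial_r\psi)+\frac{1}{r^2}\partial_\phi^2\psi-\psi=0$ for $r_1<r<1$; $\psi|_{r=r_1}^+=\psi|_{r=r_1}^-$, $\partial_r\psi|_{r=r_1}^+=\sigma\,\partial_r\psi|_{r=r_1}^-$ ($\pm$ = limits from outside/inside $r=r_1$); $\partial_r\psi|_{r=1}=g$; $\psi$ bounded at $r=0$. The Neumann-to-Dirichlet map is $R_{\sigma,r_1}(g)=\psi|_{r=1}$. Explicitly, with $D(x,y)=I_n(x)K_n(y)-K_n(x)I_n(y)$ and $D_{r,s}=\partial_x^r\partial_y^sD$, $R_{\sigma,r_1}(g)=\sum_{n\in\mathbb{Z}}\frac{I_n(r_1/\sqrt{\sigma})D_{0,1}(1,r_1)-\sigma I_n'(r_1/\sqrt{\sigma})D(1,r_1)}{I_n(r_1/\sqrt{\sigma})D_{1,1}(1,r_1)-\sigma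 I_n'(r_1/\sqrt{\sigma})D_{1,0}(1,r_1)}g_ne^{in\phi}$. (This models the Schrödinger equation with piecewise constant potential $\widetilde U=\widetilde E+\sigma^{-1}$ in the core and $\widetilde E+1$ in the shell.) *)

(* Defs.v *)
From Stdlib Require Import Reals ZArith.
From Coquelicot Require Import Coquelicot.
Open Scope R_scope.

Definition besselI (n : Z) (x : R) : R :=
  let m := Z.abs_nat n in
  Series (fun k => (x / 2) ^ (2 * k + m) / (INR (fact k) * INR (fact (k + m)))).

Definition besselK (n : Z) (x : R) : R :=
  RInt_gen (fun t => exp (- x * cosh t) * cosh (IZR n * t))
           (at_point 0) (Rbar_locally p_infty).

Definition Dn (n : Z) (x y : R) : R :=
  besselI n x * besselK n y - besselK n x * besselI n y.
Definition Dn01 (n : Z) (x y : R) : R := Derive (fun y' => Dn n x y') y.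
Definition Dn10 (n : Z) (x y : R) : R := Derive (fun x' => Dn n x' y) x.
Definition Dn11 (n : Z) (x y : R) : R :=
  Derive (fun x' => Derive (fun y' => Dn n x' y') y) x.

(* Fourier multiplier of the Neumann-to-Dirichlet map R_{sigma,r1} on the
   n-th mode.  The factor "sigma I_n'(r1/sqrt sigma)" is read as
   sigma * d/dr [I_n(r/sqrt sigma)] at r = r1. *)
Definition ntd_mult (sigma r1 : R) (n : Z) : R :=
  let a := besselI n (r1 / sqrt sigma) in
  let b := sigma * Derive (fun r => besselI n (r / sqrt sigma)) r1 in
  (a * Dn01 n 1 r1 - b * Dn n 1 r1) / (a * Dn11 n 1 r1 - b * Dn10 n 1 r1).

(* Boundary data g on the unit circle are represented by their Fourier
   coefficients g_n = (g, e^{i n phi}), n in Z.  g is in H^{-1/2}(dOmega)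
   iff sum_n (1+n^2)^{-1/2} |g_n|^2 < oo. *)
Definition in_Hmhalf (g : Z -> C) : Prop :=
  ex_series (fun k : nat => Cmod (g (Z.of_nat k)) ^ 2 / sqrt (1 + INR k ^ 2)) /\
  ex_series (fun k : nat => Cmod (g (- Z.of_nat k)%Z) ^ 2 / sqrt (1 + INR k ^ 2)).

Definition NtD (sigma r1 : R) (g : Z -> C) : Z -> C :=
  fun n => Cmult (RtoC (ntd_mult sigma r1 n)) (g n).

(* Main.v *)
Require Import Defs.
From Stdlib Require Import Reals ZArith Lra Lia.
From Coquelicot Require Import Coquelicot.
Open Scope R_scope.

Definition ca (n : nat) : R := / (INR (fact n) * INR (fact n)).
Definition ca1 := PS_derive ca.
Definition ca2 := PS_derive ca1.
Definition F0 := PSeries ca.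
Definition F1 := PSeries ca1.
Definition F2 := PSeries ca2.

Lemma fact_S n : fact (S n) = (S n * fact n)%nat.
Proof. reflexivity. Qed.

Lemma ca_pos n : 0 < ca n.
Proof.
  unfold ca. apply Rinv_0_lt_compat. apply Rmult_lt_0_compat; apply lt_0_INR, lt_O_fact.
Qed.

Lemma ca1_pos n : 0 < ca1 n.
Proof. unfold ca1, PS_derive. apply Rmult_lt_0_compat; [apply lt_0_INR; lia | apply ca_pos]. Qed.

Lemma ca2_pos n : 0 < ca2 n.
Proof. unfold ca2, PS_derive. apply Rmult_lt_0_compat; [apply lt_0_INR; lia | apply ca1_pos]. Qed.

Lemma lim_inv_sq : is_lim_seq (fun n => / (INR n + 1) * / (INR n + 1)) 0.
Proof.
  assert (H := is_lim_seq_Rbar_loc_seq (Finite 0)). simpl in H.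
  assert (H2 := is_lim_seq_mult' _ _ _ _ H H).
  rewrite Rmult_0_l in H2. eapply is_lim_seq_ext; [|exact H2].
  intros n; simpl; ring.
Qed.

Lemma ca_radius : CV_radius ca = p_infty.
Proof.
  apply CV_radius_infinite_DAlembert.
  - intros n; apply Rgt_not_eq, ca_pos.
  - eapply is_lim_seq_ext; [|exact lim_inv_sq].
    intros n. unfold ca. rewrite fact_S, mult_INR, S_INR.
    assert (Hf := INR_fact_neq_0 n). assert (0 < INR n + 1) by (generalize (pos_INR n); lra).
    rewrite Rabs_pos_eq.
    + field. split; lra.
    + apply Rlt_le. apply Rdiv_lt_0_compat; apply Rinv_0_lt_compat;
      (apply Rmult_lt_0_compat; [|]); try (apply Rmult_lt_0_compat); try (apply lt_0_INR, lt_O_fact); lra.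
Qed.

Lemma ca1_radius : CV_radius ca1 = p_infty.
Proof. unfold ca1. rewrite CV_radius_derive. apply ca_radius. Qed.
Lemma ca2_radius : CV_radius ca2 = p_infty.
Proof. unfold ca2. rewrite CV_radius_derive. apply ca1_radius. Qed.

Lemma in_rad (a : nat -> R) x : CV_radius a = p_infty -> Rbar_lt (Rabs x) (CV_radius a).
Proof. intros H; rewrite H; exact I. Qed.

Lemma F0_der u : is_derive F0 u (F1 u).
Proof. apply is_derive_PSeries, in_rad, ca_radius. Qed.
Lemma F1_der u : is_derive F1 u (F2 u).
Proof. apply is_derive_PSeries, in_rad, ca1_radius. Qed.

Lemma exps (a : nat -> R) u : ex_pseries a u -> ex_series (fun k => a k * u ^ k).
Proof.
  intros H. eapply ex_series_ext; [|exact H]. intros n. simpl.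
  rewrite pow_n_pow. unfold scal; simpl; unfold mult; simpl. ring.
Qed.

Lemma PSeries_ge0 (a : nat -> R) u : CV_radius a = p_infty -> (forall n, 0 < a n) -> 0 <= u ->
  a 0%nat <= PSeries a u.
Proof.
  intros Hr Ha Hu. assert (Hex := exps _ _ (CV_radius_inside a u (in_rad a u Hr))).
  unfold PSeries. rewrite Series_incr_1 by exact Hex.
  simpl pow. rewrite Rmult_1_r.
  assert (0 <= Series (fun k => a (S k) * u ^ S k)).
  { replace 0 with (Series (fun _ : nat => 0)).
    - apply Series_le. intros n; split; [lra|]. apply Rmult_le_pos; [apply Rlt_le, Ha| apply pow_le; lra].
      apply (ex_series_incr_1 (fun k => a k * u ^ k)). exact Hex.
    - rewrite (Series_ext (fun _ : nat => 0) (fun _ : nat => 0 * 1)) by (intros; ring).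
      rewrite Series_scal_l. ring. }
  simpl in H. lra.
Qed.

Lemma F0_pos u : 0 <= u -> 1 <= F0 u.
Proof.
  intros Hu. replace 1 with (ca 0%nat) by (unfold ca; simpl; field).
  apply PSeries_ge0; auto using ca_radius, ca_pos.
Qed.
Lemma F1_pos u : 0 <= u -> 1 <= F1 u.
Proof.
  intros Hu. replace 1 with (ca1 0%nat) by (unfold ca1, PS_derive, ca; simpl; field).
  apply PSeries_ge0; auto using ca1_radius, ca1_pos.
Qed.
Lemma F2_pos u : 0 <= u -> 0 < F2 u.
Proof.
  intros Hu. apply Rlt_le_trans with (ca2 0%nat). apply ca2_pos.
  apply PSeries_ge0; auto using ca2_radius, ca2_pos.
Qed.

Lemma F_ode u : u * F2 u + F1 u = F0 u.
Proof.
  unfold F0, F1, F2. rewrite <- PSeries_incr_1.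
  rewrite <- PSeries_plus.
  2: { apply ex_pseries_incr_1. apply CV_radius_inside, in_rad, ca2_radius. }
  2: { apply CV_radius_inside, in_rad, ca1_radius. }
  apply PSeries_ext. intros n. unfold PS_plus, PS_incr_1, ca2, ca1, PS_derive, ca.
  destruct n as [|m].
  - unfold plus, zero; simpl. field.
  - change (plus ?x ?y) with (Rplus x y).
    rewrite !fact_S, !mult_INR, !S_INR.
    assert (Hf := INR_fact_neq_0 m). assert (0 <= INR m) by apply pos_INR.
    field. repeat split; lra.
Qed.
Definition Phi u := F0 u * F0 u - F0 u * F1 u - u * (F1 u * F1 u).

Lemma is_derive_eq (f : R -> R) x l l' : is_derive f x l -> l = l' -> is_derive f x l'.
Proof. intros H E; subst; exact H. Qed.

Lemma mcomm : forall n m : R_AbsRing, mult n m = mult m n.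
Proof. intros; apply Rmult_comm. Qed.

Lemma Phi_der u : is_derive Phi u (- F0 u * F2 u).
Proof.
  assert (h00 := is_derive_mult F0 F0 u _ _ (F0_der u) (F0_der u) mcomm).
  assert (h01 := is_derive_mult F0 F1 u _ _ (F0_der u) (F1_der u) mcomm).
  assert (h11 := is_derive_mult F1 F1 u _ _ (F1_der u) (F1_der u) mcomm).
  assert (hid : is_derive (fun x : R => x) u 1) by (apply (is_derive_id u)).
  assert (hu := is_derive_mult (fun x => x) (fun x => mult (F1 x) (F1 x)) u _ _ hid h11 mcomm).
  assert (hm := is_derive_minus _ _ u _ _ (is_derive_minus _ _ u _ _ h00 h01) hu).
  eapply is_derive_eq. exact hm.
  assert (E := F_ode u).
  unfold minus, plus, opp, mult; simpl. nra.
Qed.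

Lemma F0_0 : F0 0 = 1.
Proof. unfold F0. rewrite PSeries_0. unfold ca; simpl; field. Qed.
Lemma F1_0 : F1 0 = 1.
Proof. unfold F1. rewrite PSeries_0. unfold ca1, PS_derive, ca; simpl; field. Qed.

Lemma der_cont (f : R -> R) x l : is_derive f x l -> continuity_pt f x.
Proof.
  intros H. apply continuity_pt_filterlim. apply (ex_derive_continuous f x). exists l; exact H.
Qed.

Lemma Phi_neg u : 0 < u -> Phi u < 0.
Proof.
  intros Hu.
  destruct (MVT_gen Phi 0 u (fun c => - F0 c * F2 c)) as [c [Hc E]].
  - intros x _. apply Phi_der.
  - intros x _. eapply der_cont. apply Phi_der.
  - rewrite Rmin_left in Hc by lra. rewrite Rmax_right in Hc by lra.
    assert (Phi 0 = 0) by (unfold Phi; rewrite F0_0, F1_0; ring).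
    assert (1 <= F0 c) by (apply F0_pos; lra).
    assert (0 < F2 c) by (apply F2_pos; lra).
    assert (0 < F0 c * F2 c) by (apply Rmult_lt_0_compat; lra).
    nra.
Qed.

Definition G u := F1 u / F0 u.

Lemma G_der u : 0 <= u -> is_derive G u ((F2 u * F0 u - F1 u * F1 u) / F0 u ^ 2).
Proof.
  intros Hu. unfold G. apply is_derive_div. apply F1_der. apply F0_der.
  assert (1 <= F0 u) by (apply F0_pos; lra). lra.
Qed.

Lemma G_der_neg u : 0 < u -> (F2 u * F0 u - F1 u * F1 u) / F0 u ^ 2 < 0.
Proof.
  intros Hu. assert (1 <= F0 u) by (apply F0_pos; lra).
  assert (HP := Phi_neg u Hu). unfold Phi in HP. assert (E := F_ode u).
  assert (F2 u * F0 u - F1 u * F1 u < 0).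
  { apply Rmult_lt_reg_l with u; [lra|]. nra. }
  apply Rdiv_neg_pos; [lra|]. apply pow_lt; lra.
Qed.

Lemma G_lt u v : 0 < u -> u < v -> G v < G u.
Proof.
  intros Hu Huv.
  destruct (MVT_gen G u v (fun c => (F2 c * F0 c - F1 c * F1 c) / F0 c ^ 2)) as [c [Hc E]].
  - intros x Hx. rewrite Rmin_left in Hx by lra. apply G_der; lra.
  - intros x Hx. rewrite Rmin_left in Hx by lra. eapply der_cont. apply G_der; lra.
  - rewrite Rmin_left in Hc by lra. rewrite Rmax_right in Hc by lra.
    assert (HN := G_der_neg c ltac:(lra)). nra.
Qed.

Lemma G_inj u v : 0 < u -> 0 < v -> F1 u * F0 v = F1 v * F0 u -> u = v.
Proof.
  intros Hu Hv E.
  assert (1 <= F0 u) by (apply F0_pos; lra). assert (1 <= F0 v) by (apply F0_pos; lra).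
  assert (EG : G u = G v).
  { unfold G. apply Rmult_eq_reg_r with (F0 u * F0 v); [|nra]. field_simplify; [|lra|lra]. nra. }
  destruct (Rtotal_order u v) as [Hc|[Hc|Hc]]; auto.
  - apply G_lt in Hc; auto. lra.
  - apply G_lt in Hc; auto. lra.
Qed.

Lemma F0_lt u v : 0 <= u -> u < v -> F0 u < F0 v.
Proof.
  intros Hu Huv.
  destruct (MVT_gen F0 u v F1) as [c [Hc E]].
  - intros x Hx. apply F0_der.
  - intros x Hx. eapply der_cont. apply F0_der.
  - rewrite Rmin_left in Hc by lra. rewrite Rmax_right in Hc by lra.
    assert (1 <= F1 c) by (apply F1_pos; lra). nra.
Qed.

Definition iI x := F0 (x * x / 4).
Definition dI x := F1 (x * x / 4) * (x / 2).

Lemma iI_der x : is_derive iI x (dI x).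
Proof.
  unfold iI, dI.
  eapply is_derive_eq.
  - apply (is_derive_comp F0 (fun x => x * x / 4)). apply F0_der.
    auto_derive. exact I. reflexivity.
  - unfold scal; simpl; unfold mult; simpl. field.
Qed.

Lemma besselI0 x : besselI 0 x = iI x.
Proof.
  unfold besselI, iI, F0, PSeries. change (Z.abs_nat 0) with 0%nat.
  apply Series_ext. intros n. rewrite Nat.add_0_r, Nat.add_0_r, pow_mult.
  unfold ca. assert (Hf := INR_fact_neq_0 n).
  replace ((x / 2) ^ 2) with (x * x / 4) by field. field. auto.
Qed.

Lemma iI_pos x : 0 < iI x.
Proof. unfold iI. assert (1 <= F0 (x*x/4)) by (apply F0_pos; nra). lra. Qed.

Lemma dI_pos x : 0 < x -> 0 < dI x.
Proof. intros. unfold dI. assert (1 <= F1 (x*x/4)) by (apply F1_pos; nra). nra. Qed.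

Lemma iI_lt x y : 0 <= x -> x < y -> iI x < iI y.
Proof. intros. unfold iI. apply F0_lt; nra. Qed.

Lemma exp_le' a b : a <= b -> exp a <= exp b.
Proof. intros H. destruct (Rle_lt_or_eq_dec a b H) as [H1|H1]. apply Rlt_le, exp_increasing; auto. subst; lra. Qed.

Definition kf x t := exp (- x * cosh t).

Lemma kf_cont x t : continuous (kf x) t.
Proof. apply (ex_derive_continuous (kf x)). unfold kf, cosh. auto_derive. exact I. Qed.

Lemma kf_ex x a b : ex_RInt (kf x) a b.
Proof. apply (ex_RInt_continuous (V:=R_CompleteNormedModule)). intros; apply kf_cont. Qed.

Lemma kf_pos x t : 0 < kf x t.
Proof. apply exp_pos. Qed.

Lemma cosh_pos t : 0 < cosh t.
Proof. unfold cosh. assert (H1 := exp_pos t). assert (H2 := exp_pos (-t)). lra. Qed.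

Definition U x b := RInt (kf x) 0 b.

Lemma U_mono x b b' : 0 <= b -> b <= b' -> U x b <= U x b'.
Proof.
  intros Hb Hbb. unfold U. rewrite <- (RInt_Chasles (kf x) 0 b b') by apply kf_ex.
  assert (0 <= RInt (kf x) b b') by (apply RInt_ge_0; auto using kf_ex; intros; apply Rlt_le, kf_pos).
  change (plus ?a ?c) with (Rplus a c). lra.
Qed.

Lemma U_bound x b : 0 < x -> 0 <= b -> U x b <= 2 / x.
Proof.
  intros Hx Hb.
  set (g := fun t => exp (- x * (1 + t) / 2)).
  set (Gt := fun t => - (2 / x) * exp (- x * (1 + t) / 2)).
  assert (Hd : forall t, is_derive Gt t (g t)).
  { intros t. unfold Gt, g. auto_derive. exact I. unfold Rdiv. field. lra. }
  assert (HI : is_RInt g 0 b (minus (Gt b) (Gt 0))).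
  { apply (is_RInt_derive (V:=R_CompleteNormedModule)). intros; apply Hd. intros. apply (ex_derive_continuous g). unfold g. auto_derive. exact I. }
  assert (Hle : U x b <= RInt g 0 b).
  { unfold U. apply RInt_le; auto using kf_ex. eexists; exact HI.
    intros t Ht. unfold kf, g. apply exp_le'.
    assert (cosh t >= (1 + t) / 2).
    { unfold cosh. assert (H1 := exp_ineq1_le t). assert (H2 := exp_pos (-t)). lra. }
    nra. }
  rewrite (is_RInt_unique _ _ _ _ HI) in Hle. unfold Gt, minus, plus, opp in Hle; simpl in Hle.
  assert (exp (- x * (1 + b) / 2) > 0) by apply exp_pos.
  assert (exp (- x * (1 + 0) / 2) <= 1).
  { assert (exp (- x * (1 + 0) / 2) <= exp 0) by (apply exp_le'; nra). rewrite exp_0 in H0; exact H0. }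
  assert (0 < 2 / x) by (apply Rdiv_lt_0_compat; lra).
  nra.
Qed.

Definition KL x := real (Lim_seq (fun n => U x (INR n))).

Lemma U_incr x n : U x (INR n) <= U x (INR (S n)).
Proof. apply U_mono. apply pos_INR. rewrite S_INR; lra. Qed.

Lemma KL_lim x : 0 < x -> is_lim_seq (fun n => U x (INR n)) (KL x).
Proof.
  intros Hx.
  destruct (ex_finite_lim_seq_incr (fun n => U x (INR n)) (2 / x)) as [l Hl].
  - apply U_incr.
  - intros n; apply U_bound; auto; apply pos_INR.
  - unfold KL. rewrite (is_lim_seq_unique _ _ Hl). simpl. exact Hl.
Qed.

Lemma exists_nat_gt b : exists m, b < INR m.
Proof.
  assert (H := is_lim_seq_Rbar_loc_seq p_infty). apply is_lim_seq_spec in H.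
  destruct (H b) as [N HN]. exists N. apply (HN N). lia.
Qed.

Lemma U_le_KL x b : 0 < x -> 0 <= b -> U x b <= KL x.
Proof.
  intros Hx Hb. destruct (exists_nat_gt b) as [m Hm].
  apply Rle_trans with (U x (INR m)). apply U_mono; lra.
  apply (is_lim_seq_incr_compare _ _ (KL_lim x Hx)). apply U_incr.
Qed.

Lemma KL_is_RInt_gen x : 0 < x ->
  is_RInt_gen (kf x) (at_point 0) (Rbar_locally p_infty) (KL x).
Proof.
  intros Hx P [eps HP].
  assert (H := KL_lim x Hx). apply is_lim_seq_spec in H. destruct (H eps) as [N HN].
  apply Filter_prod with (fun a => a = 0) (fun b => INR N < b).
  - reflexivity.
  - exists (INR N); auto.
  - intros a b Ha Hb. simpl in Ha. subst a. exists (U x b). split.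
    + apply (RInt_correct (V:=R_CompleteNormedModule)), kf_ex.
    + apply HP. change (Rabs (U x b - KL x) < eps).
      assert (H1 := HN N (Nat.le_refl _)). simpl in H1.
      assert (H2 : U x (INR N) <= U x b) by (apply U_mono; [apply pos_INR|lra]).
      assert (H3 : U x b <= KL x) by (apply U_le_KL; auto; generalize (pos_INR N); lra).
      apply Rabs_def2 in H1. apply Rabs_def1; lra.
Qed.

Lemma besselK0 x : 0 < x -> besselK 0 x = KL x.
Proof.
  intros Hx. unfold besselK. apply is_RInt_gen_unique.
  eapply is_RInt_gen_ext; [| exact (KL_is_RInt_gen x Hx)].
  apply filter_forall. intros [a b] t _. unfold kf. simpl.
  rewrite Rmult_0_l, cosh_0. ring.
Qed.

Lemma U1_pos x : 0 < x -> 0 < U x 1.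
Proof.
  intros Hx.
  assert (H : RInt (fun _ => exp (- x * exp 1)) 0 1 <= U x 1).
  { unfold U. apply RInt_le. lra. apply ex_RInt_const. apply kf_ex.
    intros t Ht. unfold kf. apply exp_le'.
    assert (cosh t <= exp 1).
    { unfold cosh. assert (exp (-t) <= exp t) by (apply exp_le'; lra).
      assert (exp t <= exp 1) by (apply exp_le'; lra). lra. }
    nra. }
  rewrite RInt_const in H. unfold scal in H; simpl in H; unfold mult in H; simpl in H.
  assert (0 < exp (- x * exp 1)) by apply exp_pos. lra.
Qed.

Lemma KL_pos x : 0 < x -> 0 < KL x.
Proof.
  intros Hx. apply Rlt_le_trans with (U x 1). apply U1_pos; auto. apply U_le_KL; lra.
Qed.

Lemma lim_le (u v : nat -> R) (a b : R) : (forall n, u n <= v n) -> is_lim_seq u a -> is_lim_seq v b -> a <= b.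
Proof. intros H Ha Hb. exact (is_lim_seq_le u v a b H Ha Hb). Qed.

Lemma KL_anti x y : 0 < x -> x <= y -> KL y <= KL x.
Proof.
  intros Hx Hxy. apply (lim_le (fun n => U y (INR n)) (fun n => U x (INR n))).
  - intros n. unfold U. apply RInt_le; auto using kf_ex. apply pos_INR.
    intros t Ht. unfold kf. apply exp_le'. assert (H := cosh_pos t). nra.
  - apply KL_lim; lra.
  - apply KL_lim; lra.
Qed.

Lemma kf_convex a b c t : 0 < a -> a < b -> b < c ->
  (c - a) * kf b t <= (c - b) * kf a t + (b - a) * kf c t.
Proof.
  intros Ha Hab Hbc. unfold kf. set (s := cosh t). assert (Hs : 0 < s) by apply cosh_pos.
  set (E := exp (- b * s)). assert (HE : 0 < E) by apply exp_pos.
  assert (E1 : exp (- a * s) = E * exp ((b - a) * s)).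
  { unfold E. rewrite <- exp_plus. f_equal. ring. }
  assert (E2 : exp (- c * s) = E * exp (- ((c - b) * s))).
  { unfold E. rewrite <- exp_plus. f_equal. ring. }
  rewrite E1, E2.
  assert (I1 := exp_ineq1_le ((b - a) * s)). assert (I2 := exp_ineq1_le (- ((c - b) * s))).
  assert (J1 : E * (1 + (b - a) * s) <= E * exp ((b - a) * s)) by (apply Rmult_le_compat_l; lra).
  assert (J2 : E * (1 + - ((c - b) * s)) <= E * exp (- ((c - b) * s))) by (apply Rmult_le_compat_l; lra).
  assert (K1 : (c - b) * (E * (1 + (b - a) * s)) <= (c - b) * (E * exp ((b - a) * s))) by (apply Rmult_le_compat_l; lra).
  assert (K2 : (b - a) * (E * (1 + - ((c - b) * s))) <= (b - a) * (E * exp (- ((c - b) * s)))) by (apply Rmult_le_compat_l; lra).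
  assert (EQ : (c - a) * E = (c - b) * (E * (1 + (b - a) * s)) + (b - a) * (E * (1 + - ((c - b) * s)))) by ring.
  lra.
Qed.

Lemma KL_convex a b c : 0 < a -> a < b -> b < c ->
  (c - a) * KL b <= (c - b) * KL a + (b - a) * KL c.
Proof.
  intros Ha Hab Hbc.
  apply (lim_le (fun n => (c - a) * U b (INR n)) (fun n => (c - b) * U a (INR n) + (b - a) * U c (INR n))).
  - intros n.
    assert (e1 : is_RInt (fun t => (c - a) * kf b t) 0 (INR n) ((c - a) * U b (INR n))).
    { apply (is_RInt_scal (V:=R_NormedModule)). apply (RInt_correct (V:=R_CompleteNormedModule)), kf_ex. }
    assert (e2 : is_RInt (fun t => (c - b) * kf a t + (b - a) * kf c t) 0 (INR n)
                   ((c - b) * U a (INR n) + (b - a) * U c (INR n))).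
    { apply (is_RInt_plus (V:=R_NormedModule) (fun t => (c - b) * kf a t) (fun t => (b - a) * kf c t));
      apply (is_RInt_scal (V:=R_NormedModule)); apply (RInt_correct (V:=R_CompleteNormedModule)), kf_ex. }
    rewrite <- (is_RInt_unique _ _ _ _ e1), <- (is_RInt_unique _ _ _ _ e2).
    apply RInt_le. apply pos_INR. eexists; exact e1. eexists; exact e2.
    intros t _. apply kf_convex; auto.
  - apply is_lim_seq_mult'. apply is_lim_seq_const. apply KL_lim; lra.
  - apply is_lim_seq_plus'; (apply is_lim_seq_mult'; [apply is_lim_seq_const| apply KL_lim; lra]).
Qed.

Definition rq (f : R -> R) x n := (f (x + / (INR n + 1)) - f x) / / (INR n + 1).

Lemma Derive_rq f x (l : R) : is_lim_seq (rq f x) l -> Derive f x = l.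
Proof.
  intros H. unfold Derive, Lim.
  rewrite (Lim_seq_ext _ (rq f x)). rewrite (is_lim_seq_unique _ _ H). reflexivity.
  intros n. unfold rq. simpl. rewrite Rplus_0_l. reflexivity.
Qed.

Lemma INRp n : 0 < INR n + 1.
Proof. generalize (pos_INR n); lra. Qed.

Lemma rq_der f x (l : R) : is_derive f x l -> is_lim_seq (rq f x) l.
Proof.
  intros H. apply is_derive_Reals in H. apply is_lim_seq_spec. intros eps.
  destruct (H eps (cond_pos eps)) as [d Hd].
  assert (hl := is_lim_seq_Rbar_loc_seq (Finite 0)). apply is_lim_seq_spec in hl.
  destruct (hl d) as [N HN]. exists N. intros n Hn. specialize (HN n Hn). simpl in HN.
  unfold rq. apply Hd.
  - apply Rgt_not_eq, Rinv_0_lt_compat, INRp.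
  - rewrite Rplus_0_l, Rminus_0_r in HN. exact HN.
Qed.

Lemma rq_eq n : / / (INR n + 1) = INR n + 1.
Proof. apply Rinv_inv. Qed.

Lemma rq_KL_decr x n : 0 < x -> rq KL x (S n) <= rq KL x n.
Proof.
  intros Hx. unfold rq. unfold Rdiv. rewrite !rq_eq. rewrite S_INR.
  set (p := INR n + 1). set (q := p + 1).
  assert (Hp : 0 < p) by apply INRp. assert (Hq : p < q) by (unfold q, p; lra).
  set (a' := / p). set (b' := / q).
  assert (Ea : a' * p = 1) by (unfold a'; field; lra).
  assert (Eb : b' * q = 1) by (unfold b'; field; lra).
  assert (Hb' : 0 < b') by (unfold b'; apply Rinv_0_lt_compat; lra).
  assert (Hab : b' < a') by (unfold a', b'; apply Rinv_lt_contravar; nra).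
  assert (C := KL_convex x (x + b') (x + a') Hx ltac:(lra) ltac:(lra)).
  replace (x + a' - x) with a' in C by ring. replace (x + a' - (x + b')) with (a' - b') in C by ring.
  replace (x + b' - x) with b' in C by ring.
  assert (C2 := Rmult_le_compat_l (p * q) _ _ ltac:(nra) C).
  replace (p * q * (a' * KL (x + b'))) with (q * KL (x + b')) in C2
    by (transitivity (q * (a' * p) * KL (x + b')); [rewrite Ea; ring| ring]).
  replace (p * q * ((a' - b') * KL x + b' * KL (x + a'))) with ((q - p) * KL x + p * KL (x + a')) in C2
    by (transitivity (q * (a' * p) * KL x - p * (b' * q) * KL x + p * (b' * q) * KL (x + a')); [rewrite Ea, Eb; ring| ring]).
  unfold b' in *. lra.
Qed.

Lemma rq_KL_lb x n : 0 < x -> (KL x - KL (x / 2)) / (x / 2) <= rq KL x n.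
Proof.
  intros Hx. unfold rq.
  replace ((KL (x + / (INR n + 1)) - KL x) / / (INR n + 1)) with ((KL (x + / (INR n + 1)) - KL x) * (INR n + 1))
    by (unfold Rdiv; rewrite rq_eq; ring).
  set (p := INR n + 1). assert (Hp : 0 < p) by apply INRp.
  set (h := / p). assert (Eh : h * p = 1) by (unfold h; field; lra).
  assert (Hh : 0 < h) by (unfold h; apply Rinv_0_lt_compat; lra).
  assert (C := KL_convex (x / 2) x (x + h) ltac:(lra) ltac:(lra) ltac:(lra)).
  replace (x + h - x / 2) with (h + x / 2) in C by lra. replace (x + h - x) with h in C by ring.
  replace (x - x / 2) with (x / 2) in C by lra.
  apply Rmult_le_reg_r with (x / 2). lra.
  unfold Rdiv at 1. rewrite Rmult_assoc, Rinv_l by lra. rewrite Rmult_1_r.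
  assert (C2 := Rmult_le_compat_l p _ _ ltac:(lra) C).
  replace (p * ((h + x / 2) * KL x)) with (KL x + p * (x / 2) * KL x) in C2
    by (transitivity ((h * p) * KL x + p * (x / 2) * KL x); [rewrite Eh; ring | ring]).
  replace (p * (h * KL (x / 2) + x / 2 * KL (x + h))) with (KL (x / 2) + p * (x / 2) * KL (x + h)) in C2
    by (transitivity ((h * p) * KL (x / 2) + p * (x / 2) * KL (x + h)); [rewrite Eh; ring | ring]).
  nra.
Qed.

Definition kap x := Derive KL x.

Lemma rq_KL_lim x : 0 < x -> is_lim_seq (rq KL x) (kap x).
Proof.
  intros Hx.
  destruct (ex_finite_lim_seq_decr (rq KL x) ((KL x - KL (x / 2)) / (x / 2))) as [l Hl].
  - intros n; apply rq_KL_decr; auto.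
  - intros n; apply rq_KL_lb; auto.
  - unfold kap. rewrite (Derive_rq _ _ _ Hl). exact Hl.
Qed.

Lemma kap_nonpos x : 0 < x -> kap x <= 0.
Proof.
  intros Hx. apply (lim_le (rq KL x) (fun _ => 0)).
  - intros n. unfold rq. unfold Rdiv. rewrite rq_eq.
    assert (KL (x + / (INR n + 1)) <= KL x).
    { apply KL_anti; auto. assert (0 < / (INR n + 1)) by (apply Rinv_0_lt_compat, INRp). lra. }
    assert (Hn := INRp n). nra.
  - apply rq_KL_lim; auto.
  - apply is_lim_seq_const.
Qed.

Lemma rq_K_lim x : 0 < x -> is_lim_seq (rq (besselK 0) x) (kap x).
Proof.
  intros Hx. eapply is_lim_seq_ext; [| apply rq_KL_lim; auto].
  intros n. unfold rq. rewrite !besselK0; auto.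
  assert (0 < / (INR n + 1)) by (apply Rinv_0_lt_compat, INRp). lra.
Qed.

Lemma rq_I_lim x : is_lim_seq (rq (besselI 0) x) (dI x).
Proof.
  eapply is_lim_seq_ext; [| apply rq_der, iI_der].
  intros n. unfold rq. rewrite !besselI0. reflexivity.
Qed.

Lemma Derive_comb (f g : R -> R) c d x (lf lg : R) :
  is_lim_seq (rq f x) lf -> is_lim_seq (rq g x) lg ->
  Derive (fun y => c * f y - d * g y) x = c * lf - d * lg.
Proof.
  intros Hf Hg. apply Derive_rq.
  eapply is_lim_seq_ext; [| apply is_lim_seq_minus'; (apply is_lim_seq_mult'; [apply is_lim_seq_const|]); [exact Hf|exact Hg]].
  intros n. unfold rq, Rdiv. rewrite rq_eq. ring.
Qed.

Lemma Derive_comb' (f g : R -> R) c d x (lf lg : R) :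
  is_lim_seq (rq f x) lf -> is_lim_seq (rq g x) lg ->
  Derive (fun y => f y * c - g y * d) x = lf * c - lg * d.
Proof.
  intros Hf Hg. rewrite (Derive_ext _ (fun y => c * f y - d * g y)) by (intros; ring).
  rewrite (Derive_comb f g c d x lf lg Hf Hg). ring.
Qed.

Lemma mob a1 b1 a2 b2 P P' Q Q' : 0 < a1 -> 0 < b1 -> 0 < a2 -> 0 < b2 -> 0 < P -> P' < 0 -> 0 < Q ->
  P' * Q - P * Q' <> 0 ->
  (a1 * P' - b1 * P) / (a1 * Q' - b1 * Q) = (a2 * P' - b2 * P) / (a2 * Q' - b2 * Q) ->
  a1 * b2 = a2 * b1.
Proof.
  intros Ha1 Hb1 Ha2 Hb2 HP HP' HQ Hdet E.
  assert (N1 : a1 * P' - b1 * P < 0) by nra.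
  assert (N2 : a2 * P' - b2 * P < 0) by nra.
  destruct (Req_dec (a1 * Q' - b1 * Q) 0) as [D1|D1]; destruct (Req_dec (a2 * Q' - b2 * Q) 0) as [D2|D2].
  - apply Rmult_eq_reg_r with Q; [|lra].
    transitivity (a1 * (a2 * Q')); [nra|]. nra.
  - exfalso. rewrite D1 in E. unfold Rdiv in E. rewrite Rinv_0, Rmult_0_r in E.
    symmetry in E. apply Rmult_integral in E. destruct E as [E|E]; [lra|].
    apply (Rinv_neq_0_compat _ D2). exact E.
  - exfalso. rewrite D2 in E. unfold Rdiv in E. rewrite Rinv_0, Rmult_0_r in E.
    apply Rmult_integral in E. destruct E as [E|E]; [lra|].
    apply (Rinv_neq_0_compat _ D1). exact E.
  - assert (E2 : (a1 * P' - b1 * P) * (a2 * Q' - b2 * Q) = (a2 * P' - b2 * P) * (a1 * Q' - b1 * Q)).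
    { apply Rmult_eq_reg_r with (/ (a1 * Q' - b1 * Q) * / (a2 * Q' - b2 * Q)).
      2: { apply Rmult_integral_contrapositive; split; apply Rinv_neq_0_compat; auto. }
      transitivity ((a1 * P' - b1 * P) / (a1 * Q' - b1 * Q)). field; auto.
      rewrite E. field; auto. }
    assert (E3 : (a2 * b1 - a1 * b2) * (P' * Q - P * Q') = 0) by (rewrite <- (Rminus_diag_eq _ _ E2); ring).
    apply Rmult_integral in E3. destruct E3 as [E3|E3]; [lra| contradiction].
Qed.

Section Main.
Variable r1 : R.
Hypothesis Hr : 0 < r1 < 1.

Definition uu s := (r1 / sqrt s) * (r1 / sqrt s) / 4.
Definition AA s := F0 (uu s).
Definition BB s := F1 (uu s) * r1 / 2.
Definition PP := iI 1 * KL r1 - KL 1 * iI r1.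
Definition PP' := iI 1 * kap r1 - KL 1 * dI r1.
Definition QQ := dI 1 * KL r1 - kap 1 * iI r1.
Definition QQ' := dI 1 * kap r1 - kap 1 * dI r1.

Lemma Dn_eq : Dn 0 1 r1 = PP.
Proof. unfold Dn, PP. rewrite !besselI0, !besselK0; lra. Qed.

Lemma Dn01_eq : Dn01 0 1 r1 = PP'.
Proof.
  unfold Dn01, Dn, PP'. rewrite (Derive_comb _ _ _ _ _ _ _ (rq_K_lim r1 ltac:(lra)) (rq_I_lim r1)).
  rewrite besselI0, besselK0; lra.
Qed.

Lemma Dn10_eq : Dn10 0 1 r1 = QQ.
Proof.
  unfold Dn10, Dn, QQ. rewrite (Derive_comb' _ _ _ _ _ _ _ (rq_I_lim 1) (rq_K_lim 1 ltac:(lra))).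
  rewrite besselI0, besselK0; lra.
Qed.

Lemma Dn11_eq : Dn11 0 1 r1 = QQ'.
Proof.
  unfold Dn11, QQ'.
  rewrite (Derive_ext _ (fun x' => besselI 0 x' * kap r1 - besselK 0 x' * dI r1)).
  - rewrite (Derive_comb' _ _ _ _ _ _ _ (rq_I_lim 1) (rq_K_lim 1 ltac:(lra))). ring.
  - intros t. unfold Dn. rewrite (Derive_comb _ _ _ _ _ _ _ (rq_K_lim r1 ltac:(lra)) (rq_I_lim r1)). reflexivity.
Qed.

Lemma ntd_form s : 0 < s -> ntd_mult s r1 0 = (AA s * PP' - BB s * PP) / (AA s * QQ' - BB s * QQ).
Proof.
  intros Hs. unfold ntd_mult. cbv zeta.
  rewrite Dn_eq, Dn01_eq, Dn10_eq, Dn11_eq.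
  assert (Hq : 0 < sqrt s) by (apply sqrt_lt_R0; auto).
  assert (Ea : besselI 0 (r1 / sqrt s) = AA s) by (rewrite besselI0; reflexivity).
  assert (Eb : s * Derive (fun r => besselI 0 (r / sqrt s)) r1 = BB s).
  { rewrite (Derive_ext _ (fun r => iI (r / sqrt s))) by (intros; apply besselI0).
    rewrite (is_derive_unique _ _ (scal (/ sqrt s) (dI (r1 / sqrt s)))).
    - unfold scal; simpl; unfold mult; simpl. unfold BB, dI, uu.
      assert (Ess := sqrt_sqrt s ltac:(lra)).
      replace s with (sqrt s * sqrt s) at 1 by exact Ess. field. lra.
    - apply (is_derive_comp iI (fun r => r / sqrt s)). apply iI_der.
      auto_derive. exact I. unfold Rdiv; ring. }
  rewrite Ea, Eb. reflexivity.
Qed.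

Lemma AA_pos s : 0 < s -> 0 < AA s.
Proof. intros. unfold AA. assert (1 <= F0 (uu s)) by (apply F0_pos; unfold uu; nra). lra. Qed.
Lemma BB_pos s : 0 < s -> 0 < BB s.
Proof. intros. unfold BB. assert (1 <= F1 (uu s)) by (apply F1_pos; unfold uu; nra). nra. Qed.

Lemma facts : 0 < PP /\ PP' < 0 /\ 0 < QQ /\ PP' * QQ - PP * QQ' <> 0.
Proof.
  assert (K1 := KL_pos 1 ltac:(lra)). assert (Kr := KL_pos r1 ltac:(lra)).
  assert (KA := KL_anti r1 1 ltac:(lra) ltac:(lra)).
  assert (I1 := iI_pos 1). assert (Ir := iI_pos r1). assert (IL := iI_lt r1 1 ltac:(lra) ltac:(lra)).
  assert (d1 := dI_pos 1 ltac:(lra)). assert (dr := dI_pos r1 ltac:(lra)).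
  assert (k1 := kap_nonpos 1 ltac:(lra)). assert (kr := kap_nonpos r1 ltac:(lra)).
  unfold PP, PP', QQ, QQ'. split; [|split; [|split]].
  - assert (iI 1 * KL 1 <= iI 1 * KL r1) by (apply Rmult_le_compat_l; lra).
    assert (iI r1 * KL 1 < iI 1 * KL 1) by (apply Rmult_lt_compat_r; lra). lra.
  - assert (iI 1 * kap r1 <= 0) by nra. assert (0 < KL 1 * dI r1) by nra. lra.
  - assert (0 < dI 1 * KL r1) by nra. assert (0 <= - kap 1 * iI r1) by nra. lra.
  - replace ((iI 1 * kap r1 - KL 1 * dI r1) * (dI 1 * KL r1 - kap 1 * iI r1) -
      (iI 1 * KL r1 - KL 1 * iI r1) * (dI 1 * kap r1 - kap 1 * dI r1))
      with ((iI r1 * kap r1 - KL r1 * dI r1) * (KL 1 * dI 1 - iI 1 * kap 1)) by ring.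
    assert (iI r1 * kap r1 - KL r1 * dI r1 < 0) by nra.
    assert (0 < KL 1 * dI 1 - iI 1 * kap 1) by nra.
    nra.
Qed.

End Main.

Lemma ex_series_zero : ex_series (fun _ : nat => 0).
Proof.
  apply (ex_series_ext (fun n => scal 0 ((/2) ^ n))).
  - intros n. unfold scal; simpl; unfold mult; simpl. ring.
  - apply (ex_series_scal_l (V:=R_NormedModule)). apply ex_series_geom. rewrite Rabs_pos_eq; lra.
Qed.

Theorem theorem2p2 (r1 sigma1 sigma2 : R) :
  0 < r1 < 1 -> 0 < sigma1 -> 0 < sigma2 ->
  (forall g : Z -> C, in_Hmhalf g -> NtD sigma1 r1 g = NtD sigma2 r1 g) ->
  sigma1 = sigma2.
Proof.
  intros Hr Hs1 Hs2 Hyp.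
  set (g := fun k : Z => if Z.eqb k 0 then RtoC 1 else RtoC 0).
  assert (Hg : in_Hmhalf g).
  { split; apply ex_series_incr_1; eapply ex_series_ext; [| exact ex_series_zero | | exact ex_series_zero];
      intros n; unfold g; simpl; rewrite Cmod_0; field; apply Rgt_not_eq, sqrt_lt_R0;
      generalize (pos_INR (S n)); nra. }
  assert (E := f_equal (fun h => fst (h 0%Z)) (Hyp g Hg)).
  unfold NtD, g in E. simpl in E.
  assert (Em : ntd_mult sigma1 r1 0 = ntd_mult sigma2 r1 0) by lra.
  rewrite (ntd_form r1 Hr sigma1 Hs1), (ntd_form r1 Hr sigma2 Hs2) in Em.
  destruct (facts r1 Hr) as [HP [HP' [HQ Hdet]]].
  assert (A1 : 0 < AA r1 sigma1) by (apply AA_pos; auto).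
  assert (A2 : 0 < AA r1 sigma2) by (apply AA_pos; auto).
  assert (B1 : 0 < BB r1 sigma1) by (apply BB_pos; auto).
  assert (B2 : 0 < BB r1 sigma2) by (apply BB_pos; auto).
  assert (M := mob _ _ _ _ _ _ _ _ A1 B1 A2 B2 HP HP' HQ Hdet Em).
  unfold AA, BB in M.
  assert (Hu1 : 0 < uu r1 sigma1) by (unfold uu; assert (0 < r1 / sqrt sigma1) by (apply Rdiv_lt_0_compat; [lra| apply sqrt_lt_R0; lra]); nra).
  assert (Hu2 : 0 < uu r1 sigma2) by (unfold uu; assert (0 < r1 / sqrt sigma2) by (apply Rdiv_lt_0_compat; [lra| apply sqrt_lt_R0; lra]); nra).
  assert (Eu : uu r1 sigma1 = uu r1 sigma2).
  { apply G_inj; auto. apply Rmult_eq_reg_r with (r1 / 2); [|lra]. nra. }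
  unfold uu in Eu.
  assert (S1 := sqrt_sqrt sigma1 ltac:(lra)). assert (S2 := sqrt_sqrt sigma2 ltac:(lra)).
  assert (Q1 : 0 < sqrt sigma1) by (apply sqrt_lt_R0; lra).
  assert (Q2 : 0 < sqrt sigma2) by (apply sqrt_lt_R0; lra).
  assert (E2 : r1 * r1 / sigma1 = r1 * r1 / sigma2).
  { rewrite <- S1, <- S2. replace (r1 * r1 / (sqrt sigma1 * sqrt sigma1)) with (4 * (r1 / sqrt sigma1 * (r1 / sqrt sigma1) / 4)) by (field; lra).
    rewrite Eu. field. lra. }
  assert (r1 * r1 * sigma2 = r1 * r1 * sigma1).
  { apply Rmult_eq_reg_r with (/ sigma1 * / sigma2).
    - transitivity (r1 * r1 / sigma1). field; lra. rewrite E2. field; lra.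
    - apply Rmult_integral_contrapositive; split; apply Rinv_neq_0_compat; lra. }
  apply Rmult_eq_reg_l with (r1 * r1). lra. nra.
Qed.
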